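(* Let $(X,r)$ be a finite non-degenerate solution. The group $(\mathcal{S},\circ)$ acts on $X$ by $(\sigma_a,\gamma_b)\cdot x=\sigma_a\lambda_b(x)$; more precisely, the map $(\mathcal{S},\circ)\to\mathrm{Sym}(X)$, $(\sigma_a,\gamma_b)\mapsto\sigma_a\lambda_b|_X$, is a well-defined group homomorphism.
   Context: A set-theoretic solution $(X,r)$ of the Yang--Baxter equation: $X$ non-empty, $r$ satisfies the braid relation $(r\times\mathrm{id})(\mathrm{id}\times r)(r\times\mathrm{id})=(\mathrm{id}\times r)(r\times\mathrm{id})(\mathrm{id}\times r)$; write $r(x,y)=(\lambda_x(y),\rho_y(x))$; non-degenerate means $r$ bijective and all $\lambda_x,\rho_y$ bijective. Put $\sigma_y(x)=\lambda_y\rho_{\lambda_x^{-1}(y)}(x)$. Let $A$ be the monoid $\langle X\mid x+y=y+\sigma_y(x)\rangle$, identified (via a known bijection fixing $X$) with the monoid $M=\langle X\mid x\circ y=\lambda_x(y)\circ\rho_y(x)\rangle$, so that $A$ carries operations $+$ and $\circ$ and maps $a\mapsto\lambda_a$ (monoid morphism $(A,\circ)\to\mathrm{Aut}(A,+)$), $a\mapsto\rho_a$ (anti-morphism of $(A,\circ)$), $a\mapsto\sigma_a$ (anti-morphism $(A,+)\to\mathrm{Aut}(A,+)$) extending those on $X$, with $a\circ b=a+\lambda_a(b)$, $a+b=b+\sigma_b(a)$, $\sigma_{\lambda_a(b)}\lambda_a=\lambda_a\sigma_b$; these maps leave $X$ invariant. For $a\in A$ let $\gamma_a=(\sigma_a^{-1},\lambda_a)$;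 $\mathcal{G}=\{\gamma_a:a\in A\}$ is a skew left brace with $\gamma_a+\gamma_b=\gamma_{a+b}$, $\gamma_a\circ\gamma_b=\gamma_{a\circ b}$ (well defined). Let $\mathcal{C}=\{\sigma_a:a\in A\}$, a group under composition ($\sigma_a\sigma_b=\sigma_{b+a}$), regarded as a trivial skew left brace (addition = composition). $\mathcal{S}=\mathcal{C}\rtimes\mathcal{G}$ is the set of pairs $(\sigma_a,\gamma_b)$ with componentwise addition and $(\sigma_a,\gamma_b)\circ(\sigma_c,\gamma_d)=(\sigma_a\sigma_{\lambda_b(c)},\gamma_{b\circ d})=(\sigma_{\lambda_b(c)+a},\gamma_{b\circ d})$. *)

(* Defs.v *)
From mathcomp Require Import all_boot all_fingroup.
Set Implicit Arguments. Unset Strict Implicit. Unset Printing Implicit Defensive.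

Section Solutions.
Variable X : finType.
Variable r : X * X -> X * X.

Definition lamX (x y : X) : X := (r (x, y)).1.
Definition rhoX (y x : X) : X := (r (x, y)).2.

Definition r12 (t : X * X * X) : X * X * X :=
  let: (x, y, z) := t in let: (u, v) := r (x, y) in (u, v, z).
Definition r23 (t : X * X * X) : X * X * X :=
  let: (x, y, z) := t in let: (u, v) := r (y, z) in (x, u, v).

Definition braid : Prop := forall t, r12 (r23 (r12 t)) = r23 (r12 (r23 t)).

Definition nondegenerate : Prop :=
  bijective r /\ (forall x, bijective (lamX x)) /\ (forall y, bijective (rhoX y)).

(* lambda_x^{-1}(y); under non-degeneracy it is the inverse of lambda_x *)
Definition lamX_inv (x y : X) : X := odflt y [pick z | lamX x z == y].

Definition sigX (y x : X) : X := lamX y (rhoX (lamX_inv x y) x).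

End Solutions.

Definition is_monoid (M : Type) (op : M -> M -> M) (e : M) : Prop :=
  (forall a b c, op a (op b c) = op (op a b) c) /\
  (forall a, op e a = a) /\ (forall a, op a e = a).

(* (A, op, e) together with iota : X -> A is the monoid presented by the
   generators X and the relations  iota x * iota y = iota u * iota v
   where (u, v) = rel x y  (universal property of the presentation). *)
Definition presents (X : Type) (A : Type) (op : A -> A -> A) (e : A)
    (iota : X -> A) (rel : X -> X -> X * X) : Prop :=
  is_monoid op e /\
  (forall x y, op (iota x) (iota y) = op (iota (rel x y).1) (iota (rel x y).2)) /\
  forall (M : Type) (mop : M -> M -> M) (me : M), is_monoid mop me ->
  forall f : X -> M,
    (forall x y, mop (f x) (f y) = mop (f (rel x y).1) (f (rel x y).2)) ->
    exists g : A -> M,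
      (g e = me /\ (forall u v, g (op u v) = mop (g u) (g v)) /\
       forall x, g (iota x) = f x) /\
      (forall g' : A -> M,
         (g' e = me /\ (forall u v, g' (op u v) = mop (g' u) (g' v)) /\
          forall x, g' (iota x) = f x) -> g' =1 g).

(* X is identified with
   a subset of A via the injection iota.  The unit of both + and o is zero
   (the empty word). *)
Definition structure_data (X : finType) (r : X * X -> X * X)
    (A : Type) (iota : X -> A) (add circ : A -> A -> A) (zero : A)
    (lam sig siginv : A -> A -> A) : Prop :=
  injective iota /\
  (* A = < X | x + y = y + sigma_y(x) > *)
  presents add zero iota (fun x y => (y, sigX r y x)) /\
  (* (A, o) is identified with M = < X | x o y = lambda_x(y) o rho_y(x) > *)
  presents circ zero iota (fun x y => r (x, y)) /\
  (forall a b, lam (circ a b) =1 lam a \o lam b) /\ lam zero =1 id /\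
  (forall a, bijective (lam a)) /\
  (forall a u v, lam a (add u v) = add (lam a u) (lam a v)) /\
  (forall a, lam a zero = zero) /\
  (forall x y, lam (iota x) (iota y) = iota (lamX r x y)) /\
  (forall a b, sig (add a b) =1 sig b \o sig a) /\ sig zero =1 id /\
  (forall a, cancel (sig a) (siginv a) /\ cancel (siginv a) (sig a)) /\
  (forall a u v, sig a (add u v) = add (sig a u) (sig a v)) /\
  (forall a, sig a zero = zero) /\
  (forall x y, sig (iota y) (iota x) = iota (sigX r y x)) /\
  (forall a b, circ a b = add a (lam a b)) /\
  (forall a b, add a b = add b (sig b a)) /\
  (forall a b, sig (lam a b) \o lam a =1 lam a \o sig b) /\
  (forall a x, exists y, lam a (iota x) = iota y) /\
  (forall a x, exists y, sig a (iota x) = iota y).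

(* gamma_b = (sigma_b^{-1}, lambda_b) ; elements of S are pairs (sigma_a, gamma_b).
   Two representatives (a,b), (a',b') give the same element of S iff the
   corresponding maps A -> A coincide. *)
Definition S_eq (A : Type) (lam sig siginv : A -> A -> A) (a b a' b' : A) : Prop :=
  sig a =1 sig a' /\ siginv b =1 siginv b' /\ lam b =1 lam b'.

(* Main.v *)
Require Import Defs.
From mathcomp Require Import all_boot all_fingroup.
From Stdlib Require Import ClassicalEpsilon.

Theorem lemma2p3 (X : finType) (r : X * X -> X * X)
    (Hbraid : braid r) (Hnd : nondegenerate r)
    (A : Type) (iota : X -> A) (add circ : A -> A -> A) (zero : A)
    (lam sig siginv : A -> A -> A)
    (HA : structure_data r iota add circ zero lam sig siginv) :
  exists phi : A -> A -> {perm X},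
    (* phi a b is the permutation sigma_a lambda_b |_X of X *)
    (forall a b x, iota (phi a b x) = sig a (lam b (iota x))) /\
    (* well defined on S = C x| G *)
    (forall a b a' b', S_eq lam sig siginv a b a' b' -> phi a b = phi a' b') /\
    (* homomorphism: (sigma_a,gamma_b) o (sigma_c,gamma_d)
                     = (sigma_{lambda_b(c)+a}, gamma_{b o d}) is sent to the
       composite of the images *)
    (forall a b c d x,
       phi (add (lam b c) a) (circ b d) x = phi a b (phi c d x)).
Proof.
case: HA => iinj [_ [_ [lamM [_ [lamB [_ [_ [_ [sigM [_ [sigC [_ [_ [_
  [_ [_ [comp [lamX sigX]]]]]]]]]]]]]]]]]].
have ex : forall a b x, exists y, iota y = sig a (lam b (iota x)).
  move=> a b x; case: (lamX b x) => z ->; case: (sigX a z) => y ->; by exists y.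
pose g a b x := proj1_sig (constructive_indefinite_description _ (ex a b x)).
have gE : forall a b x, iota (g a b x) = sig a (lam b (iota x)).
  by move=> a b x; rewrite /g; case: constructive_indefinite_description.
have ginj : forall a b, injective (g a b).
  move=> a b x y /(congr1 iota); rewrite !gE => /(can_inj (proj1 (sigC a))).
  by case: (lamB b) => h h1 _ /(can_inj h1) /iinj.
exists (fun a b => perm (ginj a b)).
split; first by move=> a b x; rewrite permE gE.
split.
  move=> a b a' b' [H1 [_ H3]]; apply/permP => x; apply: iinj.
  by rewrite !permE !gE H1 H3.
move=> a b c d x; apply: iinj; rewrite !permE !gE sigM lamM /=.
by have := comp b c (lam d (iota x)) => /= ->.
Qed.
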